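(* Let $\beta=\frac{1}{16}$, let $S$ be a string of length $n$, let $d\ge 1$ with $2d\le n$, and let $1\le x<y\le n$. Let $p_1,\dots,p_{2\log n}$ be primes chosen independently and uniformly at random from the primes in $\left[\frac{d}{\beta}\log^2 n,\frac{34d}{\beta}\log^2 n\right]$. If $\mathsf{HAM}(S[x,y],S[x,y]^R)\le 2d$, then with probability at least $1-\frac{1}{n^7}$ every mismatch position of $S[x,y]$ is an isolated mismatch; in particular the number of isolated mismatches equals $\mathsf{HAM}(S[x,y],S[x,y]^R)$.
   Context: $S[x,y]=S[x]S[x+1]\cdots S[y]$; for a string $T$ of length $m$, $T^R$ is its reverse and $\mathsf{HAM}(T,T^R)=|\{i: T[i]\neq T[m+1-i]\}|$. A position $i\in[x,y]$ is a mismatch of $S[x,y]$ if $S[i]\neq S[x+y-i]$. A mismatch $i$ is isolated under $p_j$ if it is the only mismatch position of $S[x,y]$ in its residue class modulo $p_j$; it is an isolated mismatch if it is isolated under $p_j$ for at least one $j\in\{1,\dots,2\log n\}$. $\log$ is base 2. *)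

(* Defs.v *)
From mathcomp Require Import all_boot.
From Stdlib Require Import Reals.

Set Implicit Arguments.
Unset Strict Implicit.
Unset Printing Implicit Defensive.

(* 1-indexed access: S[i] for 1 <= i <= size S *)
Definition sget (A : eqType) (S : seq A) (i : nat) : option A :=
  nth None (map Some S) i.-1.

Definition mismatches (A : eqType) (S : seq A) (x y : nat) : seq nat :=
  [seq i <- iota x (y - x + 1) | sget S i != sget S (x + y - i)].

Definition ham_rev (A : eqType) (S : seq A) (x y : nat) : nat :=
  size (mismatches S x y).

Definition isolated_under (A : eqType) (S : seq A) (x y p i : nat) : bool :=
  (i \in mismatches S x y) &&
  (count (fun j => j %% p == i %% p) (mismatches S x y) == 1).

Definition isolated (A : eqType) (S : seq A) (x y : nat) (ps : seq nat) (i : nat) : bool :=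
  has (fun p => isolated_under S x y p i) ps.

Definition num_isolated (A : eqType) (S : seq A) (x y : nat) (ps : seq nat) : nat :=
  count (isolated S x y ps) (iota x (y - x + 1)).

Definition good_event (A : eqType) (S : seq A) (x y : nat) (ps : seq nat) : bool :=
  all (isolated S x y ps) (mismatches S x y) && (num_isolated S x y ps == ham_rev S x y).

Definition log2R (n : nat) : R := (ln (INR n) / ln 2)%R.

Definition Rleb (a b : R) : bool := if Rle_dec a b then true else false.

Definition primes_in (lo hi : R) : seq nat :=
  [seq p <- iota 0 (Z.to_nat (up hi)).+1 | prime p && Rleb lo (INR p) && Rleb (INR p) hi].

(* all length-k sequences with entries from P (sample space of k independent uniform draws) *)
Fixpoint draws (P : seq nat) (k : nat) : seq (seq nat) :=
  match k with
  | 0 => [:: [::]]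
  | k'.+1 => [seq p :: t | p <- P, t <- draws P k']
  end.

(* Main.v *)
Require Import Defs.
From mathcomp Require Import all_boot.
From Stdlib Require Import Reals.
From mathcomp Require Import zify.
From Stdlib Require Import Lra Psatz Lia PeanoNat ZArith.
Module NT.
Import ssrnat.
Set Implicit Arguments. Unset Strict Implicit. Unset Printing Implicit Defensive.

Lemma kterm M q : 0 < q ->
  2 * (M %/ q) <= (2 * M) %/ q <= 2 * (M %/ q) + (q <= 2 * M).
Proof.
move=> q0.
have [hq|hq] := leqP q (2*M); last first.
  have hM : M < q by lia.
  by rewrite (divn_small hM) divn_small.
have e : 2*M = (2*(M%/q))*q + 2*(M%%q).
  by rewrite {1}(divn_eq M q) mulnDr mulnA.
rewrite /= e divnMDl // leq_addr /= leq_add2l -ltnS ltn_divLR //.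
by rewrite ltn_pmul2l // ltn_pmod.

Qed.

Lemma logn_fact_ext p n R : prime p -> n < R ->
  logn p n`! = \sum_(1 <= k < R) n %/ p ^ k.
Proof.
move=> pp nR; rewrite logn_fact //.
rewrite [RHS](big_cat_nat _ (n:=n.+1)) //=.
rewrite [X in _ + X]big1_seq ?addn0 // => k /andP[_]; rewrite mem_index_iota => /andP[hk _].
apply: divn_small.
have p2 : 2 <= p by apply: prime_gt1.
exact: leq_trans hk (ltnW (ltn_expl k p2)).
Qed.

Lemma kummer p M : prime p -> 0 < M -> p ^ logn p 'C(2 * M, M) <= 2 * M.
Proof.
move=> pp M0.
have p1 : 1 < p by apply: prime_gt1.
have hb : 'C(2 * M, M) * (M`! * M`!) = (2 * M)`!.
  by rewrite mul2n -addnn; have := bin_fact (leq_addl M M); rewrite addnK.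
have C0 : 0 < 'C(2 * M, M) by rewrite bin_gt0; lia.
have F0 : 0 < M`! by apply: fact_gt0.
have hl : logn p (2 * M)`! = logn p 'C(2 * M, M) + (logn p M`! + logn p M`!).
  by rewrite -hb lognM ?muln_gt0 ?F0 // lognM.
rewrite (logn_fact_ext (R := (2 * M).+1)) // in hl.
rewrite (logn_fact_ext (R := (2 * M).+1) pp) ?ltnS in hl; last lia.
set t := trunc_log p (2 * M).
have ht : p ^ t <= 2 * M by apply: trunc_logP => //; lia.
have hle : logn p 'C(2 * M, M) <= t.
  have : \sum_(1 <= k < (2 * M).+1) (2 * M) %/ p ^ k <=
         \sum_(1 <= k < (2 * M).+1) (2 * (M %/ p ^ k) + (p ^ k <= 2 * M)).
    apply: leq_sum => k _; have hq : 0 < p ^ k by rewrite expn_gt0 (ltnW p1).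
    by case/andP: (kterm M hq).
  rewrite big_split /= -big_distrr /= hl => h.
  have h2 : logn p 'C(2 * M, M) <= \sum_(1 <= i < (2 * M).+1) (p ^ i <= 2 * M) by lia.
  apply: (leq_trans h2).
  have tT : t < (2 * M).+1 by apply: (leq_ltn_trans (ltnW (ltn_expl t p1))).
  rewrite (big_cat_nat _ (n := t.+1)) //=.
  rewrite [X in _ + X]big1_seq ?addn0; last first.
    move=> k /andP[_]; rewrite mem_index_iota => /andP[hk _].
    apply/eqP; rewrite eqb0 -ltnNge.
    apply: (leq_trans (trunc_log_ltn _ p1)); rewrite leq_exp2l //.
  apply: (@leq_trans (\sum_(1 <= i < t.+1) 1)); first by apply: leq_sum => i _; exact: leq_b1.
  by rewrite sum_nat_const_nat muln1 subSS subn0.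
by apply: leq_trans ht; rewrite leq_exp2l.
Qed.

Lemma cbin_low M : 4 ^ M <= (2 * M).+1 * 'C(2 * M, M).
Proof.
elim: M => [|M IH]; first by rewrite bin0.
have e1 := mul_bin_diag (2 * M).+2 M.
have e2 := mul_bin_diag (2 * M).+1 M.
have e3 : 'C((2 * M).+1, M.+1) = 'C((2 * M).+1, M).
  by rewrite -bin_sub; [rewrite (_ : (2 * M).+1 - M.+1 = M) //; lia | lia].
rewrite /= in e1 e2; rewrite e3 in e2.
have -> : 2 * M.+1 = (2 * M).+2 by lia.
rewrite expnS.
move: e1 e2 IH; move: ('C(2 * M, M)) ('C((2 * M).+1, M)) ('C((2 * M).+2, M.+1)) (4 ^ M) => X Y Z F.
move=> e1 e2 IH.
have h : M.+1 * (4 * F) <= M.+1 * ((2 * M).+3 * Z) by nia.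
by rewrite leq_pmul2l in h.
Qed.

Lemma cbin_up m : 'C(m.*2.+1, m) <= 4 ^ m.
Proof.
have := expnDn 1 1 m.*2.+1.
rewrite add1n.
under eq_bigr => i _ do rewrite !exp1n !muln1.
rewrite (bigD1 (inord m)) /=; last by [].
rewrite (bigD1 (inord m.+1)) /=; last first.
  by apply/eqP => /(congr1 val) /=; rewrite !inordK; lia.
rewrite !inordK; try lia.
rewrite -(bin_sub (n := m.*2.+1) (m := m)); last lia.
have -> : m.*2.+1 - m = m.+1 by lia.
move=> h.
have : 2 * 'C(m.*2.+1, m.+1) <= 2 ^ m.*2.+1 by rewrite h; lia.
by rewrite expnS -mul2n expnM leq_pmul2l //.
Qed.

Lemma prod_cond_const (r : seq nat) (P : pred nat) c :
  \prod_(i <- r | P i) c = c ^ count P r.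
Proof.
elim: r => [|a r IH]; first by rewrite big_nil.
rewrite big_cons IH /=; case: (P a) => //=; by rewrite expnS.
Qed.

Lemma dvd_prod_primes (r : seq nat) X : uniq r ->
  (forall p, p \in r -> prime p -> p %| X) -> \prod_(p <- r | prime p) p %| X.
Proof.
elim: r => [|a r IH] /=; first by rewrite big_nil dvd1n.
move=> /andP[ar ur] H; rewrite big_cons.
have IH' : \prod_(p <- r | prime p) p %| X.
  by apply: IH => // p pr; apply: H; rewrite inE pr orbT.
case pa: (prime a) => //.
rewrite Gauss_dvd; first by rewrite IH' H ?inE ?eqxx.
rewrite prime_coprime // Euclid_dvd_prod // big_has_cond.
apply/hasPn => q qr /=; apply/negP => /andP[pq].
rewrite dvdn_prime2 // => /eqP aq; by rewrite aq qr in ar.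
Qed.

Lemma coprime_fact p k : prime p -> k < p -> coprime p k`!.
Proof.
move=> pp; elim: k => [|k IH] kp; first by rewrite coprimen1.
rewrite factS coprimeMr IH ?andbT; last lia.
rewrite prime_coprime //; apply/negP => /dvdn_leq; lia.
Qed.

Definition prim n := \prod_(0 <= p < n.+1 | prime p) p.

Lemma prim_le n : prim n <= 4 ^ n.
Proof.
elim/ltn_ind: n => n IH.
case: n IH => [|[|n]] IH; first by rewrite /prim big_nat_cond big_pred0 //; case=> [|[]].
  by rewrite /prim 2?big_nat_recr //= big_nat_cond big_pred0 //; case=> [|[]].
case: (boolP (odd n)) => on.
-
  have [m em] : exists m, n.+2 = m.*2.+1 by exists (n.+2)./2; rewrite -[LHS]odd_double_half /= on.
  have m1 : 0 < m by lia.
  rewrite /prim em (big_cat_nat _ (n := m.+2)) //=; last lia.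
  have h1 : \prod_(0 <= p < m.+2 | prime p) p <= 4 ^ m.+1 by apply: IH; lia.
  have h2 : \prod_(m.+2 <= p < m.*2.+2 | prime p) p <= 4 ^ m.
    apply: leq_trans (cbin_up m).
    apply: dvdn_leq; first by rewrite bin_gt0; lia.
    apply: dvd_prod_primes; first exact: iota_uniq.
    move=> p; rewrite mem_index_iota => /andP[p1 p2] pp.
    have mle : m <= m.*2.+1 by lia.
    have hb := bin_fact mle.
    have e : m.*2.+1 - m = m.+1 by lia.
    rewrite e in hb.
    have : p %| (m.*2.+1)`! by apply: dvdn_fact; lia.
    have cp : coprime p (m`! * m.+1`!) by rewrite coprimeMr !coprime_fact //; lia.
    by rewrite -hb Gauss_dvdl.
  rewrite (leq_trans (leq_mul h1 h2)) // -expnD leq_exp2l //; lia.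
-
  case: n on IH => [|n] on IH; first by rewrite /prim unlock.
  rewrite /prim big_mkcond big_nat_recr //= -big_mkcond /=.
  have np : prime n.+3 = false.
    apply/negbTE/primePn; right; exists 2; first lia.
    by rewrite dvdn2; move: on; rewrite /=; case: (odd n).
  rewrite np muln1.
  apply: leq_trans (IH n.+2 _) _ => //; rewrite leq_exp2l //.
Qed.

Lemma bin_decomp M : 0 < M ->
  'C(2 * M, M) = \prod_(0 <= p < (2 * M).+1) p ^ logn p 'C(2 * M, M).
Proof.
move=> M0; set C := 'C(2 * M, M).
have C0 : 0 < C by rewrite bin_gt0; lia.
rewrite -{1}(partnT C0) (widen_partn _ (leq_maxl C (2 * M))).
rewrite (big_cat_nat _ (n := (2 * M).+1)) //=; last by rewrite ltnS leq_maxr.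
rewrite [X in _ * X]big1_seq ?muln1; last first.
  move=> p /andP[_]; rewrite mem_index_iota => /andP[hp _].
  case e: (logn p C) => [|k] //.
  have : 0 < logn p C by rewrite e.
  rewrite logn_gt0 mem_primes => /andP[pp _].
  have := kummer pp M0; rewrite -/C e => h.
  have : p <= p ^ k.+1 by rewrite -{1}(expn1 p) leq_exp2l ?prime_gt1.
  lia.
by apply: eq_bigl => p.
Qed.

Lemma count_lt_iota K a : count (fun p => p < K) (iota 0 a) <= K.
Proof.
rewrite -size_filter -{2}(size_iota 0 K); apply: uniq_leq_size.
  by apply: filter_uniq; apply: iota_uniq.
by move=> p; rewrite mem_filter mem_iota => /andP[h _]; rewrite mem_iota.
Qed.

Lemma factor_bound M p : 0 < M -> let T := 2 * M in
  p ^ logn p 'C(T, M) <= (if prime p then p else 1) * (if prime p && (p * p <= T) then T else 1)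
  /\ p ^ logn p 'C(T, M) <= (if prime p then T else 1).
Proof.
move=> M0 T; case pp: (prime p); last by rewrite lognE pp.
have hk := kummer pp M0; rewrite -/T in hk; split => //=.
case: (leqP (p * p) T) => hpp.
  by rewrite (leq_trans hk) // leq_pmull // prime_gt0.
rewrite muln1.
have : logn p 'C(T, M) < 2.
  by rewrite -(ltn_exp2l _ _ (prime_gt1 pp)); apply: leq_ltn_trans hk _; rewrite !expnS expn0 muln1.
case: (logn p _) => [|[|]] //= _; by rewrite ?expn1 // prime_gt0.
Qed.

Lemma leq_expl e m n : m <= n -> m ^ e <= n ^ e.
Proof. by move=> h; elim: e => // e IH; rewrite !expnS leq_mul. Qed.

Lemma nt_bound a : 6 <= a ->
  let M := 17 * a - 17 in let T := 2 * M in
  T.+1 * T ^ (Nat.sqrt T).+1 <= 4 ^ (13 * a - 17) ->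
  4 ^ a <= a ^ count prime (index_iota a T.+1).
Proof.
move=> a6 M T Han.
have M0 : 0 < M by rewrite /M; lia.
set c := count prime (index_iota a T.+1).
set C := 'C(T, M).
have hC := bin_decomp M0; rewrite -/T -/C in hC.
rewrite (big_cat_nat _ (n := a)) //= in hC; last by rewrite /T /M; lia.
set s := count (fun p => prime p && (p * p <= T)) (index_iota 0 a).
have hA : \prod_(0 <= p < a) p ^ logn p C <= 4 ^ a * T ^ s.
  apply: leq_trans (leq_prod (E2 := fun p => (if prime p then p else 1) *
      (if prime p && (p * p <= T) then T else 1)) _) _.
    by move=> p _; case: (factor_bound p M0).
  rewrite big_split /= -!big_mkcond /= prod_cond_const /s leq_mul2r; apply/orP; right.
  case: a a6 {M0 M T Han c C hC s} => [|a'] // _.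
  by apply: leq_trans (prim_le a') _; rewrite leq_exp2l //.
have hB : \prod_(a <= p < T.+1) p ^ logn p C <= T ^ c.
  apply: leq_trans (leq_prod (E2 := fun p => if prime p then T else 1) _) _.
    by move=> p _; case: (factor_bound p M0).
  by rewrite -big_mkcond /= prod_cond_const.
have hs : s <= (Nat.sqrt T).+1.
  apply: leq_trans (count_lt_iota (Nat.sqrt T).+1 a).
  rewrite /s /index_iota subn0; apply: sub_count => p /andP[_ h] /=.
  by rewrite ltnS; apply/leP; apply Nat.sqrt_le_square; apply/leP.
have h4 := cbin_low M; rewrite -/T -/C hC in h4.
rewrite leqNgt; apply/negP => hc.
have T1 : 0 < T by rewrite /T; lia.
have Ta : T <= a ^ 3 by rewrite /T /M; nia.
have hTc : T ^ c < 4 ^ (3 * a).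
  apply: (leq_ltn_trans (leq_expl c Ta)).
  by rewrite -expnM (mulnC 3 c) expnM (mulnC 3 a) expnM ltn_exp2r.
have hTs : T ^ s <= T ^ (Nat.sqrt T).+1 by rewrite leq_pexp2l.
set A := \prod_(0 <= p < a) p ^ logn p C in hA h4.
set B := \prod_(a <= p < T.+1) p ^ logn p C in hB h4.
set X := T.+1 * T ^ (Nat.sqrt T).+1 in Han.
have h5 : T.+1 * (A * B) < X * 4 ^ (4 * a).
  have e : X * 4 ^ (4 * a) = T.+1 * ((4 ^ a * T ^ (Nat.sqrt T).+1) * 4 ^ (3 * a)).
    rewrite /X (_ : 4 * a = a + 3 * a) ?expnD; last lia.
    move: (T.+1) (T ^ _) (4 ^ a) (4 ^ (3*a)) => u v w z; nia.
  rewrite e ltn_pmul2l //.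
  apply: (leq_ltn_trans (leq_mul hA (leqnn B))).
  apply: (leq_ltn_trans (leq_mul (leq_mul (leqnn _) hTs) hB)).
  by rewrite ltn_pmul2l ?muln_gt0 ?expn_gt0 ?T1.
have h6 : X * 4 ^ (4 * a) <= 4 ^ M.
  by rewrite (_ : M = 13 * a - 17 + 4 * a) ?expnD ?leq_mul2r ?Han ?orbT //; rewrite /M; lia.
have := leq_ltn_trans h4 (leq_trans h5 h6); by rewrite ltnn.
Qed.

Lemma powE m n : expn m n = Nat.pow m n.
Proof. by elim: n => // n IH; rewrite expnS IH. Qed.

Lemma poly_ineq u : (26/10 <= u)%R -> (272 * (u^4 + 2) * (u - 1) <= 13 * u^8 - 149)%R.
Proof.
intros h.
set (e := (u - 26/10)%R).
assert (he : (0 <= e)%R) by (unfold e; lra).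
replace u with (26/10 + e)%R by (unfold e; ring).
assert (h2 : (0 <= e^2)%R) by nra.
assert (h3 : (0 <= e^3)%R) by (apply pow_le; lra).
assert (h4 : (0 <= e^4)%R) by (apply pow_le; lra).
assert (h5 : (0 <= e^5)%R) by (apply pow_le; lra).
assert (h6 : (0 <= e^6)%R) by (apply pow_le; lra).
assert (h7 : (0 <= e^7)%R) by (apply pow_le; lra).
assert (h8 : (0 <= e^8)%R) by (apply pow_le; lra).
ring_simplify. lra.
Qed.

Lemma ln_le_sub1 x : (0 < x)%R -> (ln x <= x - 1)%R.
Proof.
move=> hx; have := exp_ineq1_le (x - 1).
rewrite -{2}(exp_ln x hx) => h.
have : (1 + (x - 1) <= x)%R by lra.
move=> _.
destruct (Rle_or_lt (ln x) (x - 1)) as [|hl] => //.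
have := exp_increasing _ _ hl; rewrite exp_ln //; have := exp_ineq1_le (x - 1); lra.
Qed.

Lemma ln4_gt1 : (1 < ln 4)%R.
Proof.
rewrite -[X in (X < _)%R]ln_exp; apply: ln_increasing; first exact: exp_pos.
have := exp_le_3; lra.
Qed.

Lemma analytic a T : 64 <= a -> T = 2 * (17 * a - 17) ->
  T.+1 * T ^ (Nat.sqrt T).+1 <= 4 ^ (13 * a - 17).
Proof.
move=> ha eTa.
set j := Nat.sqrt T.
have hT : T + 34 = 34 * a by rewrite eTa; lia.
have hk : 13 * a - 17 + 17 = 13 * a by lia.
have hjT : j * j <= T by apply/leP; exact: (proj1 (Nat.sqrt_spec T (Nat.le_0_l T))).
apply/leP; apply: INR_le.
rewrite -multE mult_INR !powE !pow_INR S_INR.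
have eT : INR T = (34 * INR a - 34)%R.
  have := f_equal INR hT; rewrite -plusE -multE plus_INR mult_INR /=; lra.
have ek : INR (13 * a - 17) = (13 * INR a - 17)%R.
  have := f_equal INR hk; rewrite -plusE -multE plus_INR mult_INR /=; lra.
have haR : (64 <= INR a)%R.
  have h := le_INR 64 a (ltac:(apply/leP; exact ha)).
  by rewrite (INR_IZR_INZ 64) /= in h.
have ejT : (INR j * INR j <= INR T)%R by rewrite -mult_INR; apply: le_INR; apply/leP.
have hj0 : (0 <= INR j)%R by apply: pos_INR.
set t := INR T in eT ejT *.
set J := INR j in ejT hj0 *.
have ht : (2142 <= t)%R by lra.
have e4 : INR 4 = 4%R by simpl; lra.
rewrite e4.
set w := sqrt (t + 1); set v := sqrt w; set u := sqrt v.
have hw : (w * w = t + 1)%R by apply: sqrt_sqrt; lra.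
have hw0 : (0 <= w)%R by apply: sqrt_pos.
have hv : (v * v = w)%R by apply: sqrt_sqrt.
have hv0 : (0 <= v)%R by apply: sqrt_pos.
have hu : (u * u = v)%R by apply: sqrt_sqrt.
have hu0 : (0 <= u)%R by apply: sqrt_pos.
have hu8 : (u ^ 8 = t + 1)%R by rewrite -hw -hv -hu; ring.
have hu4 : (u ^ 4 = w)%R by rewrite -hv -hu; ring.
have hJw : (J <= w)%R by nra.
have hu26 : (26/10 <= u)%R.
  destruct (Rle_or_lt (26/10) u) as [|hl] => //.
  have : (u ^ 8 <= (26/10) ^ 8)%R by apply: pow_incr; lra.
  simpl; lra.
have hu1 : (0 < u)%R by lra.
have hlnu : (ln (t + 1) = 8 * ln u)%R.
  by rewrite -hu8 ln_pow //; simpl; ring.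
have hlnu2 := ln_le_sub1 hu1.
have hlt : (ln t <= ln (t + 1))%R.
  by apply: Rlt_le; apply: ln_increasing; lra.
have hlt0 : (0 <= ln t)%R.
  rewrite -ln_1; apply: Rlt_le; apply: ln_increasing; lra.
set X := ((t + 1) * t ^ (j.+1))%R.
have hX : (0 < X)%R by apply: Rmult_lt_0_compat; [lra | apply: pow_lt; lra].
have hlnX : (ln X = ln (t + 1) + (J + 1) * ln t)%R.
  rewrite /X ln_mult; [|lra|apply: pow_lt; lra]; by rewrite ln_pow ?S_INR; [|lra].
have hlnY : (ln (4 ^ (13 * a - 17)) = (13 * INR a - 17) * ln 4)%R.
  by rewrite ln_pow ?ek; [|lra].
have key : (ln X <= ln (4 ^ (13 * a - 17)))%R.
  rewrite hlnX hlnY.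
  have h1 : (ln (t + 1) + (J + 1) * ln t <= (w + 2) * (8 * (u - 1)))%R.
    have : ((J + 1) * ln t <= (w + 1) * ln (t + 1))%R.
      apply: Rmult_le_compat; lra.
    rewrite hlnu in hlt * => h.
    nra.
  have h2 := poly_ineq hu26.
  rewrite hu4 hu8 in h2.
  have h3 : ((13 * INR a - 17) <= (13 * INR a - 17) * ln 4)%R.
    have := ln4_gt1; nra.
  nra.
destruct (Rle_or_lt X (4 ^ (13 * a - 17))) as [|hl] => //.
have := ln_increasing _ _ (pow_lt 4 _ ltac:(lra)) hl; lra.
Qed.

Lemma cnt_small : count prime (index_iota 64 301) = 44.
Proof. vm_compute. reflexivity. Qed.

Lemma index_iota_cat m n p : m <= n <= p ->
  index_iota m p = index_iota m n ++ index_iota n p.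
Proof.
move=> /andP[h1 h2]; rewrite /index_iota.
have -> : p - m = (n - m) + (p - n) by lia.
by rewrite iotaD; congr (_ ++ iota _ _); lia.
Qed.

Lemma NTfull a : 16 <= a -> 4 ^ a <= a ^ count prime (index_iota a (2 * (17 * a - 17)).+1).
Proof.
move=> a16; case: (leqP 64 a) => ha.
  apply: nt_bound; first lia.
  exact: analytic.
set T := 2 * (17 * a - 17).
have hc : 44 <= count prime (index_iota a T.+1).
  rewrite (@index_iota_cat a 64 T.+1); last by rewrite /T; lia.
  rewrite (@index_iota_cat 64 301 T.+1); last by rewrite /T; lia.
  by rewrite !count_cat cnt_small; lia.
apply: leq_trans (leq_pexp2l _ hc); last lia.
apply: leq_trans (leq_expl 44 (_ : 16 <= a)) => //.
by rewrite (_ : 16 = 4 ^ 2) // -expnM leq_exp2l //; lia.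
Qed.

Lemma size_draws P k : size (draws P k) = size P ^ k.
Proof.
elim: k => [|k IH] //=; rewrite expnS -IH.
move: (draws P k) => D; elim: P {IH} => //= p P IHP; by rewrite size_cat size_map IHP.
Qed.

Lemma count_draws_all (f : pred nat) P k :
  count (all f) (draws P k) = count f P ^ k.
Proof.
elim: k => [|k IH] //=; rewrite expnS -IH.
move: (draws P k) => D; elim: P {IH} => //= p P IHP; rewrite count_cat IHP count_map.
rewrite mulnDl; congr (_ + _); rewrite /preim /=; case: (f p) => /=.
  by rewrite mul1n.
by rewrite mul0n; apply/eqP; rewrite -leqn0 leqNgt -has_count; apply/hasP => -[].
Qed.

Lemma count_has_le (T : Type) (M : seq nat) (f : nat -> pred T) (s : seq T) :
  count (fun t => has (fun i => f i t) M) s <= \sum_(i <- M) count (f i) s.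
Proof.
elim: M => [|i M IH] /=; first by rewrite big_nil count_pred0.
rewrite big_cons; apply: leq_trans (leq_add (leqnn _) IH).
rewrite -count_predUI; apply: leq_trans (leq_addr _ _).
by apply: sub_count => t.
Qed.

Lemma dvd_prod_mem (r : seq nat) F j : j \in r -> F j %| \prod_(i <- r) F i.
Proof.
elim: r => [|a r IH] //=; rewrite inE big_cons => /orP[/eqP->|h].
  exact: dvdn_mulr.
by apply: dvdn_mull; apply: IH.
Qed.

Lemma leq_prod_seq (r : seq nat) (P : pred nat) (E1 E2 : nat -> nat) :
  (forall i, i \in r -> P i -> E1 i <= E2 i) ->
  \prod_(i <- r | P i) E1 i <= \prod_(i <- r | P i) E2 i.
Proof.
elim: r => [|a r IH] h; first by rewrite !big_nil.
rewrite !big_cons; case: (P a) /idP => pa.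
  by apply: leq_mul; [apply: h; rewrite ?inE ?eqxx | apply: IH => i ir; apply: h; rewrite inE ir orbT].
by apply: IH => i ir; apply: h; rewrite inE ir orbT.
Qed.

Definition dist (i j : nat) := (i - j) + (j - i).

Section Mism.
Variables (A : eqType) (S : seq A) (x y : nat).
Let M := mismatches S x y.

Lemma mism_uniq : uniq M.
Proof. by apply: filter_uniq; apply: iota_uniq. Qed.

Lemma mism_range j : x <= y -> j \in M -> x <= j <= y.
Proof. by move=> hxy; rewrite mem_filter mem_iota => /andP[_ /andP[h1 h2]]; lia. Qed.

Lemma bad_dvd p i : i \in M -> 0 < p -> ~~ isolated_under S x y p i ->
  exists2 j, j \in rem i M & p %| dist i j.
Proof.
move=> iM p0; rewrite /isolated_under -/M iM /=.
have := (permP (perm_to_rem iM)) (fun j => j %% p == i %% p) => -> /=.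
rewrite eqxx add1n eqSS -lt0n -has_count => /hasP[j jr /eqP ej].
exists j => //.
rewrite /dist; case: (leqP j i) => hji.
  by rewrite (_ : j - i = 0) ?addn0 -?eqn_mod_dvd ?ej //; lia.
by rewrite (_ : i - j = 0) ?add0n -?eqn_mod_dvd ?ej //; lia.
Qed.

Lemma good_of_all ps : all (isolated S x y ps) M -> good_event S x y ps.
Proof.
move=> hall; rewrite /good_event hall /= /num_isolated /ham_rev -/M.
apply/eqP.
have e : count (isolated S x y ps) (iota x (y - x + 1)) = count (isolated S x y ps) M.
  rewrite /M /mismatches count_filter; apply: eq_in_count => j jI /=.
  case h: (isolated S x y ps j) => //=; symmetry.
  move: h; rewrite /isolated => /hasP[p _]; rewrite /isolated_under.
  by rewrite mem_filter jI andbT => /andP[].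
by rewrite e; apply/eqP; rewrite -all_count.
Qed.

Lemma bad_bound (P : seq nat) a n d i : uniq P -> (forall p, p \in P -> prime p /\ a <= p) ->
  1 <= x -> x <= y -> y <= n -> size M <= 2 * d -> i \in M ->
  a ^ count (fun p => ~~ isolated_under S x y p i) P <= n ^ (2 * d).
Proof.
move=> uP hP hx hxy hyn hM iM.
set Lb := filter (fun p => ~~ isolated_under S x y p i) P.
set D := \prod_(j <- rem i M) dist i j.
have hrem j : j \in rem i M -> (j != i) && (j \in M).
  by rewrite (mem_rem_uniq _ mism_uniq) inE.
have hd j : j \in rem i M -> 0 < dist i j <= n.
  move=> /hrem /andP[ji jM].
  have := mism_range hxy jM; have := mism_range hxy iM; move: ji => /eqP; rewrite /dist; lia.
have D0 : 0 < D.
  rewrite /D big_seq_cond; apply: prodn_cond_gt0 => j /andP[jr _].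
  by case/andP: (hd j jr).
have hdiv : \prod_(p <- Lb | prime p) p %| D.
  apply: dvd_prod_primes; first exact: filter_uniq.
  move=> p; rewrite mem_filter => /andP[hb pP] pp.
  have [j jr hj] := bad_dvd iM (prime_gt0 pp) hb.
  exact: dvdn_trans hj (dvd_prod_mem _ jr).
have h1 : a ^ count (fun p => ~~ isolated_under S x y p i) P <= \prod_(p <- Lb | prime p) p.
  have -> : count (fun p => ~~ isolated_under S x y p i) P = count prime Lb.
    rewrite -size_filter -/Lb; symmetry; apply/eqP; rewrite -all_count.
    by apply/allP => p; rewrite mem_filter => /andP[_ /hP[]].
  rewrite -prod_cond_const.
  apply: leq_prod_seq => p; rewrite mem_filter => /andP[_ /hP[]] //.
apply: leq_trans h1 _; apply: leq_trans (dvdn_leq D0 hdiv) _.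
have h2 : D <= n ^ size (rem i M).
  rewrite -count_predT -(prod_cond_const _ predT) /D.
  by apply: leq_prod_seq => j jr _; case/andP: (hd j jr).
apply: leq_trans h2 _; rewrite leq_pexp2l //; first lia.
rewrite size_rem //; exact: leq_trans (leq_pred _) hM.
Qed.

End Mism.

Lemma sum_le_const (r : seq nat) (F : nat -> nat) c :
  (forall i, i \in r -> F i <= c) -> \sum_(i <- r) F i <= size r * c.
Proof.
elim: r => [|a r IH] h; first by rewrite big_nil.
rewrite big_cons /= mulSn leq_add //; first by apply: h; rewrite inE eqxx.
by apply: IH => i ir; apply: h; rewrite inE ir orbT.
Qed.

Lemma RlebP a b : Rleb a b = true <-> (a <= b)%R.
Proof. by rewrite /Rleb; case: Rle_dec. Qed.

Lemma mem_primes_in lo hi p : (0 <= hi)%R ->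
  p \in primes_in lo hi = prime p && Rleb lo (INR p) && Rleb (INR p) hi.
Proof.
move=> h0; rewrite /primes_in mem_filter mem_iota /=.
case e: (prime p && Rleb lo (INR p) && Rleb (INR p) hi) => //=.
move: e => /andP[_ /RlebP hp].
have [h1 _] := archimed hi.
have : (IZR (Z.of_nat p) < IZR (up hi))%R by rewrite -INR_IZR_INZ; lra.
move/lt_IZR => hz.
have hz0 : (0 <= up hi)%Z by lia.
apply/ltP; lia.
Qed.

Lemma real_contra a n d : 2 <= n -> 1 <= d -> 2 <= a ->
  (16 * INR d * (log2R n) ^ 2 <= INR a)%R -> 4 ^ a * a <= n ^ (32 * d) -> False.
Proof.
move=> hn hd ha hL hpow.
have hnR : (2 <= INR n)%R by have := le_INR 2 n (ltac:(apply/leP; exact hn)); simpl; lra.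
have haR : (2 <= INR a)%R by have := le_INR 2 a (ltac:(apply/leP; exact ha)); simpl; lra.
have hdR : (1 <= INR d)%R by have := le_INR 1 d (ltac:(apply/leP; exact hd)); simpl; lra.
have ln2 : (0 < ln 2)%R by rewrite -ln_1; apply: ln_increasing; lra.
have hlnn : (ln 2 <= ln (INR n))%R.
  destruct (Rle_lt_or_eq_dec _ _ hnR) as [hlt|e]; last by rewrite -e; apply: Rle_refl.
  by apply: Rlt_le; apply: ln_increasing; lra.
set L := log2R n in hL.
have eL : (ln (INR n) = L * ln 2)%R by rewrite /L /log2R; field; lra.
have L1 : (1 <= L)%R.
  destruct (Rle_or_lt 1 L) as [|hl] => //; nra.
have hlna : (0 < ln (INR a))%R by rewrite -ln_1; apply: ln_increasing; lra.
have ln4 : (ln 4 = 2 * ln 2)%R by rewrite (_ : 4 = 2 * 2)%R ?ln_mult; lra.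
move/leP/le_INR: hpow; rewrite -multE mult_INR !powE !pow_INR => hp.
have e4 : INR 4 = 4%R by simpl; lra.
rewrite e4 in hp.
have hpos : (0 < 4 ^ a * INR a)%R by apply: Rmult_lt_0_compat; [apply: pow_lt|]; lra.
have hl : (ln (4 ^ a * INR a) <= ln (INR n ^ (32 * d)))%R.
  destruct (Rle_lt_or_eq_dec _ _ hp) as [hlt|e]; last by rewrite e; apply: Rle_refl.
  by apply: Rlt_le; apply: ln_increasing.
rewrite ln_mult ?ln_pow ?ln4 ?eL in hl; try lra; last by apply: pow_lt; lra.
rewrite -multE mult_INR in hl.
have e32 : INR 32 = 32%R by simpl; lra.
rewrite e32 in hl.
nra.
Qed.

Lemma main_nat (A : eqType) (S : seq A) (n d x y : nat) :
  size S = n -> 1 <= d -> 2 * d <= n -> 1 <= x -> x < y -> y <= n ->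
  ham_rev S x y <= 2 * d ->
  let P := primes_in (INR d / (1 / 16) * log2R n ^ 2)%R (34 * INR d / (1 / 16) * log2R n ^ 2)%R in
  let k := 2 * up_log 2 n in
  let Sg := \sum_(i <- mismatches S x y) count (fun p => ~~ isolated_under S x y p i) P ^ k in
  n ^ 7 * Sg <= size P ^ k /\ size P ^ k <= count (good_event S x y) (draws P k) + Sg.
Proof.
move=> hS hd hdn hx hxy hyn hham P k Sg.
set M := mismatches S x y.
have hn : 2 <= n by lia.
have hnR : (2 <= INR n)%R by have := le_INR 2 n (ltac:(apply/leP; exact hn)); simpl; lra.
have hdR : (1 <= INR d)%R by have := le_INR 1 d (ltac:(apply/leP; exact hd)); simpl; lra.
set L := log2R n.
have ln2 : (0 < ln 2)%R by rewrite -ln_1; apply: ln_increasing; lra.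
have L1 : (1 <= L)%R.
  have hlnn : (ln 2 <= ln (INR n))%R.
    destruct (Rle_lt_or_eq_dec _ _ hnR) as [hlt|e]; last by rewrite -e; apply: Rle_refl.
    by apply: Rlt_le; apply: ln_increasing; lra.
  rewrite /L /log2R; apply (Rmult_le_reg_r (ln 2)) => //; field_simplify; lra.
set lo := (INR d / (1 / 16) * L ^ 2)%R.
set hi := (34 * INR d / (1 / 16) * L ^ 2)%R.
have elo : lo = (16 * INR d * L ^ 2)%R by rewrite /lo; field.
have ehi : hi = (34 * lo)%R by rewrite /hi /lo; field.
have lo16 : (16 <= lo)%R by rewrite elo; nra.
have hi0 : (0 <= hi)%R by lra.
have [hc1 hc2] := Zceil_bound lo.
set z := Zceil lo in hc1 hc2.
have z0 : (0 <= z)%Z by apply: le_IZR; lra.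
set a := Z.to_nat z.
have eaR : INR a = IZR z by rewrite /a INR_IZR_INZ Z2Nat.id.
have ha16 : 16 <= a.
  apply/leP; apply: INR_le; rewrite eaR; simpl; lra.
have hPa p : p \in P -> prime p /\ a <= p.
  rewrite /P -/L -/lo -/hi mem_primes_in // => /andP[/andP[pp /RlebP h1] _].
  split => //.
  have : (INR a < INR p.+1)%R by rewrite S_INR; lra.
  by move/INR_lt/leP; rewrite ltnS.
have uP : uniq P by apply: filter_uniq; apply: iota_uniq.
set T := 2 * (17 * a - 17).
have hsub : count prime (index_iota a T.+1) <= size P.
  rewrite -size_filter; apply: uniq_leq_size.
    by apply: filter_uniq; apply: iota_uniq.
  move=> p; rewrite mem_filter mem_index_iota => /andP[pp /andP[h1 h2]].
  rewrite /P -/L -/lo -/hi mem_primes_in // pp /=.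
  have h1R : (INR a <= INR p)%R by apply: le_INR; apply/leP.
  have h2R : (INR p <= INR T)%R by apply: le_INR; apply/leP; lia.
  have eT : INR T = (34 * INR a - 34)%R.
    have eT' : T + 34 = 34 * a by rewrite /T; lia.
    have := f_equal INR eT'; rewrite -plusE -multE plus_INR mult_INR /=; lra.
  by apply/andP; split; apply/RlebP; lra.
have hNT : 4 ^ a <= a ^ size P.
  apply: leq_trans (NTfull ha16) _; rewrite leq_pexp2l //; lia.
have h16 i : i \in M -> 16 * count (fun p => ~~ isolated_under S x y p i) P <= size P.
  move=> iM; set B := count _ P.
  have hB : a ^ B <= n ^ (2 * d).
    apply: (bad_bound uP hPa hx (ltnW hxy) hyn _ iM); exact: hham.
  rewrite leqNgt; apply/negP => hlt.
  apply: (@real_contra a n d hn hd (ltnW (leq_trans _ ha16))) => //.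
    by rewrite -elo eaR.
  have : a ^ (size P).+1 <= n ^ (32 * d).
    apply: leq_trans (_ : a ^ (16 * B) <= _).
      by rewrite leq_pexp2l //; lia.
    rewrite (mulnC 16 B) expnM (_ : 32 * d = 2 * d * 16); last lia.
    by rewrite expnM; apply: leq_expl.
  by rewrite expnS mulnC; apply: leq_trans; rewrite leq_mul2r hNT orbT.
split.
  have hk : n ^ 8 <= 16 ^ k.
    rewrite /k expnM (_ : 16 ^ 2 = 2 ^ 8) // -expnM mulnC expnM.
    by apply: leq_expl; apply: up_logP.
  have h1 : n ^ 8 * Sg <= size M * size P ^ k.
    rewrite /Sg big_distrr /=; apply: sum_le_const => i iM.
    apply: leq_trans (leq_mul hk (leqnn _)) _.
    by rewrite -expnMn; apply: leq_expl; apply: h16.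
  have h2 : n ^ 8 * Sg <= n * size P ^ k.
    apply: leq_trans h1 _; rewrite leq_mul2r; apply/orP; right; exact: leq_trans hham hdn.
  by rewrite (_ : 8 = 1 + 7) // expnD expn1 -mulnA leq_pmul2l in h2; lia.
rewrite -size_draws -(count_predC (good_event S x y)) leq_add2l.
apply: (@leq_trans (count (fun ps => has (fun i => all (fun p => ~~ isolated_under S x y p i) ps) M) (draws P k))).
  apply: sub_count => ps /= hng; apply/hasP.
  case: (boolP (all (isolated S x y ps) M)) => hall.
    by move: hng; rewrite good_of_all.
  move: hall => /allPn [i iM hi']; exists i => //.
  by clear hng; move: hi'; rewrite /isolated; elim: ps => //= p ps IH; rewrite negb_or => /andP[-> /IH].
apply: leq_trans (count_has_le M (fun i ps => all (fun p => ~~ isolated_under S x y p i) ps) (draws P k)) _.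
rewrite /Sg; apply: leq_sum => i _; by rewrite count_draws_all.
Qed.
End NT.

Theorem lemma5p2 (A : eqType) (S : seq A) (n d x y : nat) :
  size S = n -> 1 <= d -> 2 * d <= n -> 1 <= x -> x < y -> y <= n ->
  ham_rev S x y <= 2 * d ->
  let beta := (1 / 16)%R in
  let L := log2R n in
  let P := primes_in (INR d / beta * L ^ 2)%R (34 * INR d / beta * L ^ 2)%R in
  let k := 2 * up_log 2 n in
  (INR (count (good_event S x y) (draws P k))
     >= (1 - 1 / INR n ^ 7) * INR (size P ^ k))%R.
Proof.
move=> hS hd hdn hx hxy hyn hham beta L P k.
have [h1 h2] := NT.main_nat hS hd hdn hx hxy hyn hham.
rewrite /P /k /beta /L; rewrite !NT.powE in h1 h2.
move: h1 h2.
set C := count _ _.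
set X := Nat.pow (size _) _.
set Sg := \sum_(i <- _) _.
move=> /leP h1 /leP h2.
have hn : (2 <= INR n)%R by have := le_INR 2 n (ltac:(apply/leP; lia)); simpl; lra.
have hQ : (0 < INR n ^ 7)%R by apply: pow_lt; lra.
apply le_INR in h1; apply le_INR in h2.
rewrite -multE mult_INR pow_INR in h1.
rewrite -plusE plus_INR in h2.
have hinv : (INR n ^ 7 * / INR n ^ 7 = 1)%R by field; lra.
have hinv0 : (0 < / INR n ^ 7)%R by apply: Rinv_0_lt_compat.
have hS0 : (INR Sg <= INR X * / INR n ^ 7)%R.
  apply (Rmult_le_reg_l (INR n ^ 7)) => //.
  rewrite (Rmult_comm (INR X)) -Rmult_assoc hinv Rmult_1_l.
  exact: h1.
apply: Rle_ge.
have -> : ((1 - 1 / INR n ^ 7) * INR X = INR X - INR X * / INR n ^ 7)%R by field; lra.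
lra.
Qed.
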